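(* In the setting of the context, $K_1(\theta_0,\theta_0+c)\downarrow K_1$ and $K_1(\theta_0-c,\theta_0)\downarrow K_1$ as $c\downarrow0$.
   Context: Let $G\in\mathrm{C}^2(\mathbb{R})$ be coercive ($G(p)\to\infty$ as $p\to\pm\infty$), $p_1<p_2$ with $G'(p_1)<0<G'(p_2)$, $L=\frac{G'(p_2)}{G'(p_2)-G'(p_1)}$, $\ell\in(0,\min\{L,1-L\})$, and $K_1=\max\{|G'(p)|:\,p\in[p_1,p_2]\}$. Let $f$ be a $1$-periodic function in $\mathrm{C}^1(\mathbb{R})$ with $f'$ Lipschitz, $p_1\le f\le p_2$, $f=p_1$ on $[0,L-\ell]$, $f=p_2$ on $[L,1-\ell]$, and $\int_0^1G'(f(x))dx=0$. Define the $1$-periodic Lipschitz potential $V(x)=-f'(x)-G(f(x))$ and $\theta_0=\int_0^1f(x)dx$. For each $\theta\in\mathbb{R}$, $f_\theta\in\mathrm{C}^1(\mathbb{R})$ denotes the unique $1$-periodic function with $\int_0^1f_\theta=\theta$ and $f_\theta'+G(f_\theta)+V=\overline{H}(\theta)$ on $\mathbb{R}$ for some (unique) constant $\overline{H}(\theta)$. For $\theta_1<\theta_2$, $K_1(\theta_1,\theta_2)=\max\{|G'(p)|:\,\min_{[0,1]}f_{\theta_1}\le p\le\max_{[0,1]}f_{\theta_2}\}$. *)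

(* Defs.v *)
From Stdlib Require Import Reals.
From Coquelicot Require Import Coquelicot.
Open Scope R_scope.

Definition Kmax (G : R -> R) (a b : R) : R :=
  real (Lub_Rbar (fun y => exists p, a <= p <= b /\ y = Rabs (Derive G p))).

Definition fmin01 (g : R -> R) : R :=
  real (Glb_Rbar (fun y => exists x, 0 <= x <= 1 /\ y = g x)).
Definition fmax01 (g : R -> R) : R :=
  real (Lub_Rbar (fun y => exists x, 0 <= x <= 1 /\ y = g x)).

Definition K1th (G : R -> R) (F : R -> R -> R) (t1 t2 : R) : R :=
  Kmax G (fmin01 (F t1)) (fmax01 (F t2)).

Definition periodic1 (g : R -> R) : Prop := forall x, g (x + 1) = g x.

Definition isC1 (g : R -> R) : Prop :=
  forall x, ex_derive g x /\ continuous (Derive g) x.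

Definition decr_to_at_0 (k : R -> R) (l : R) : Prop :=
  (forall c c', 0 < c -> c <= c' -> k c <= k c') /\
  filterlim k (at_right 0) (locally l).

(* Main.v *)
Require Import Defs.
From Stdlib Require Import Reals Lra Lia ZArith.
From Coquelicot Require Import Coquelicot.
Open Scope R_scope.

Lemma cont_pt (g : R -> R) x : continuous g x -> continuity_pt g x.
Proof. intro H. apply continuity_pt_filterlim. exact H. Qed.

Lemma lub_char (g : R -> R) a b : a <= b -> (forall x, a <= x <= b -> continuous g x) ->
  let S := real (Lub_Rbar (fun y => exists p, a <= p <= b /\ y = g p)) in
  (forall p, a <= p <= b -> g p <= S) /\ (exists p, a <= p <= b /\ g p = S).
Proof.
  intros hab hc S.
  destruct (continuity_ab_maj g a b hab) as [xm [H1 H2]].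
  { intros; apply cont_pt, hc; auto. }
  assert (E : Lub_Rbar (fun y => exists p, a <= p <= b /\ y = g p) = Finite (g xm)).
  { apply is_lub_Rbar_unique. split.
    - intros y [p [hp ->]]. simpl. apply H1; auto.
    - intros l hl. apply hl. exists xm; auto. }
  unfold S; rewrite E; simpl. split; [exact H1|]. exists xm; auto.
Qed.

Lemma glb_char (g : R -> R) a b : a <= b -> (forall x, a <= x <= b -> continuous g x) ->
  let S := real (Glb_Rbar (fun y => exists p, a <= p <= b /\ y = g p)) in
  (forall p, a <= p <= b -> S <= g p) /\ (exists p, a <= p <= b /\ g p = S).
Proof.
  intros hab hc S.
  destruct (continuity_ab_min g a b hab) as [xm [H1 H2]].
  { intros; apply cont_pt, hc; auto. }
  assert (E : Glb_Rbar (fun y => exists p, a <= p <= b /\ y = g p) = Finite (g xm)).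
  { apply is_glb_Rbar_unique. split.
    - intros y [p [hp ->]]. simpl. apply H1; auto.
    - intros l hl. apply hl. exists xm; auto. }
  unfold S; rewrite E; simpl. split; [exact H1|]. exists xm; auto.
Qed.


Lemma per_nat (g : R -> R) : periodic1 g -> forall n x, g (x + INR n) = g x /\ g (x - INR n) = g x.
Proof.
  intros hp n; induction n as [|n IH]; intro x.
  - simpl. split; f_equal; ring.
  - rewrite S_INR. split.
    + replace (x + (INR n + 1)) with ((x + INR n) + 1) by ring. rewrite hp. apply IH.
    + rewrite <- (hp (x - (INR n + 1))). replace (x - (INR n + 1) + 1) with (x - INR n) by ring. apply IH.
Qed.

Lemma per_reduce (g : R -> R) : periodic1 g -> forall x, exists x', 0 <= x' <= 1 /\ g x = g x'.
Proof.
  intros hp x. destruct (base_Int_part x) as [h1 h2].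
  exists (x - IZR (Int_part x)). split; [lra|].
  destruct (Z_le_gt_dec 0 (Int_part x)) as [hz|hz].
  - rewrite <- (Z2Nat.id _ hz). rewrite <- INR_IZR_INZ. symmetry. apply (per_nat g hp).
  - replace (Int_part x) with (- Z.of_nat (Z.to_nat (- Int_part x)))%Z by lia.
    rewrite opp_IZR, <- INR_IZR_INZ.
    replace (x - - INR (Z.to_nat (- Int_part x))) with (x + INR (Z.to_nat (- Int_part x))) by ring.
    symmetry. apply (per_nat g hp).
Qed.

Lemma mvt_open (phi dphi : R -> R) a b : (forall t, is_derive phi t (dphi t)) -> a < b ->
  exists c, a < c < b /\ phi b - phi a = dphi c * (b - a).
Proof.
  intros hd hab.
  set (pr := (fun t => exist (fun l => derivable_pt_abs phi t l) (dphi t)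
                 (proj1 (is_derive_Reals phi t (dphi t)) (hd t))) : derivable phi).
  destruct (MVT_cor1 phi a b pr hab) as [c [h1 h2]].
  exists c; split; auto.
Qed.

Lemma nonincr (phi dphi : R -> R) a b : (forall t, is_derive phi t (dphi t)) -> a <= b ->
  (forall t, a < t < b -> dphi t <= 0) -> phi b <= phi a.
Proof.
  intros hd hab hn. destruct (Req_dec a b) as [->|hne]; [lra|].
  destruct (mvt_open phi dphi a b hd) as [c [hc e]]; [lra|].
  assert (dphi c * (b - a) <= 0). { apply Rmult_le_0_r; [apply hn; lra| lra]. }
  lra.
Qed.

Lemma fermat_min (d dd : R -> R) x0 : (forall t, is_derive d t (dd t)) ->
  (forall z, d x0 <= d z) -> dd x0 = 0.
Proof.
  intros hd hm.
  set (pr := exist (fun l => derivable_pt_abs d x0 l) (dd x0)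
                 (proj1 (is_derive_Reals d x0 (dd x0)) (hd x0)) : derivable_pt d x0).
  pose proof (deriv_minimum d (x0 - 1) (x0 + 1) x0 pr) as H.
  simpl in H. apply H; try lra. intros; apply hm.
Qed.

Lemma barrier (d dd : R -> R) (K x y : R) : x <= y -> (forall t, is_derive d t (dd t)) ->
  d x < 0 -> 0 <= d y -> (forall t, x <= t <= y -> d t < 0 -> dd t <= - K * d t) -> False.
Proof.
  intros hxy hd hx hy hb.
  set (E := fun t => x <= t <= y /\ forall u, x <= u <= t -> d u < 0).
  assert (hbd : bound E). { exists y. intros t [ht _]. lra. }
  assert (hne : exists t, E t). { exists x. split; [lra|]. intros u hu. replace u with x by lra. auto. }
  destruct (completeness E hbd hne) as [s [hs1 hs2]].
  assert (hxs : x <= s). { apply hs1. unfold E. split; [lra|]. intros u hu. replace u with x by lra. auto. }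
  assert (hsy : s <= y). { apply hs2. intros t [ht _]. lra. }
  assert (c1 : forall u, x <= u < s -> d u < 0).
  { intros u hu. destruct (Rlt_dec u s) as [_|]; [|lra].
    destruct (Rlt_dec (d u) 0) as [|hn]; [auto|exfalso].
    assert (is_upper_bound E u).
    { intros t [ht1 ht2]. destruct (Rle_dec t u) as [|hgt]; [auto|].
      exfalso. apply hn. apply ht2. lra. }
    assert (s <= u) by (apply hs2; auto). lra. }
  assert (c2 : 0 <= d s).
  { destruct (Rle_dec 0 (d s)) as [|hneg]; [auto|]. exfalso.
    assert (hcs : continuity_pt d s).
    { apply continuity_pt_filterlim. apply (ex_derive_continuous d s). exists (dd s); apply hd. }
    destruct (hcs (- d s)) as [del [hdel hdd]]; [lra|].
    assert (s < y) by (destruct (Req_dec s y) as [->|]; lra).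
    set (t := Rmin (s + del / 2) y).
    assert (E t).
    { split. { unfold t. split; [apply Rmin_glb; lra|apply Rmin_r]. }
      intros u hu. destruct (Rlt_dec u s) as [hlt|hge]; [apply c1; lra|].
      destruct (Req_dec u s) as [->|hne']; [lra|].
      assert (hu2 : u <= s + del/2) by (apply Rle_trans with t; [lra|apply Rmin_l]).
      specialize (hdd u). simpl in hdd. unfold R_dist in hdd.
      assert (Rabs (d u - d s) < - d s).
      { apply hdd. split. { unfold D_x, no_cond. split; auto. }
        rewrite Rabs_right; lra. }
      apply Rabs_def2 in H0. lra. }
    assert (t <= s) by (apply hs1; auto).
    assert (s < t). { unfold t. apply Rmin_glb_lt; lra. }
    lra. }
  assert (hxs' : x < s) by (destruct (Req_dec x s) as [<-|]; lra).
  set (phi := fun t => d t * exp (K * t)).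
  assert (hphi : forall t, is_derive phi t ((dd t + K * d t) * exp (K * t))).
  { intro t. unfold phi.
    assert (H2 : is_derive (fun t => exp (K*t)) t (K * exp(K*t))) by (auto_derive; [auto|ring]).
    pose proof (@is_derive_mult R_AbsRing d (fun t => exp (K*t)) t _ _ (hd t) H2 ltac:(intros; apply Rmult_comm)) as H3.
    replace ((dd t + K * d t) * exp (K * t)) with (plus (mult (dd t) (exp (K * t))) (mult (d t) (K * exp (K * t)))).
    exact H3. unfold plus, mult; cbn. ring. }
  assert (phi s <= phi x).
  { apply (nonincr phi _ x s hphi); [lra|]. intros t ht.
    assert (d t < 0) by (apply c1; lra).
    assert (dd t <= - K * d t) by (apply hb; [lra|auto]).
    apply Rmult_le_0_r; [lra| left; apply exp_pos]. }
  unfold phi in H.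
  assert (0 <= d s * exp (K * s)) by (apply Rmult_le_pos; [auto|left; apply exp_pos]).
  assert (d x * exp (K * x) < 0). { assert (0 < exp (K * x)) by apply exp_pos. nra. }
  lra.
Qed.

Lemma C1_cont u : isC1 u -> forall x, continuous u x.
Proof. intros h x. apply (ex_derive_continuous u x). apply h. Qed.

Lemma C1_der u : isC1 u -> forall x, is_derive u x (Derive u x).
Proof. intros h x. apply Derive_correct. apply h. Qed.

Lemma range01 u : periodic1 u -> isC1 u ->
  (forall x, fmin01 u <= u x <= fmax01 u) /\ fmin01 u <= fmax01 u.
Proof.
  intros hp hc.
  assert (hc' : forall x, 0 <= x <= 1 -> continuous u x) by (intros; apply C1_cont; auto).
  destruct (lub_char u 0 1 ltac:(lra) hc') as [l1 [pm [hpm1 hpm2]]].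
  destruct (glb_char u 0 1 ltac:(lra) hc') as [g1 [pn [hpn1 hpn2]]].
  unfold fmin01, fmax01. split.
  - intro x. destruct (per_reduce u hp x) as [x' [hx' ->]]. split; [apply g1|apply l1]; auto.
  - apply Rle_trans with (u 0); [apply g1|apply l1]; lra.
Qed.

Lemma absDG_cont G : (forall p, continuous (Derive G) p) -> forall p, continuous (fun p => Rabs (Derive G p)) p.
Proof. intros h p. apply continuous_Rabs_comp. apply h. Qed.

Lemma Kmax_char G a b : (forall p, continuous (Derive G) p) -> a <= b ->
  (forall p, a <= p <= b -> Rabs (Derive G p) <= Kmax G a b) /\
  (exists p, a <= p <= b /\ Rabs (Derive G p) = Kmax G a b).
Proof.
  intros h hab. apply (lub_char (fun p => Rabs (Derive G p)) a b hab).
  intros; apply absDG_cont; auto.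
Qed.

Lemma Kmax_nonneg G a b : (forall p, continuous (Derive G) p) -> a <= b -> 0 <= Kmax G a b.
Proof.
  intros h hab. destruct (Kmax_char G a b h hab) as [k _].
  apply Rle_trans with (Rabs (Derive G a)); [apply Rabs_pos| apply k; lra].
Qed.

Lemma Kmax_mono G a' a b b' : (forall p, continuous (Derive G) p) -> a' <= a -> a <= b -> b <= b' ->
  Kmax G a b <= Kmax G a' b'.
Proof.
  intros h h1 h2 h3.
  destruct (Kmax_char G a b h h2) as [_ [p [hp <-]]].
  destruct (Kmax_char G a' b' h ltac:(lra)) as [k _]. apply k; lra.
Qed.

Lemma G_lip G a b : (forall p, ex_derive G p) -> (forall p, continuous (Derive G) p) -> a <= b ->
  forall u v, a <= u <= b -> a <= v <= b -> Rabs (G u - G v) <= Kmax G a b * Rabs (u - v).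
Proof.
  intros hd hc hab u v hu hv.
  destruct (Kmax_char G a b hc hab) as [k _].
  destruct (MVT_gen G v u (Derive G)) as [c [hc1 hc2]].
  - intros; apply Derive_correct; auto.
  - intros; apply cont_pt. apply (ex_derive_continuous G x); auto.
  - rewrite hc2, Rabs_mult. apply Rmult_le_compat_r; [apply Rabs_pos|].
    apply k. split.
    + apply Rle_trans with (Rmin v u); [apply Rmin_glb; lra| lra].
    + apply Rle_trans with (Rmax v u); [lra| apply Rmax_lub; lra].
Qed.

Definition sol (G V u : R -> R) (H : R) :=
  periodic1 u /\ isC1 u /\ forall x, Derive u x + G (u x) + V x = H.

Lemma diff_int g h : isC1 g -> isC1 h ->
  RInt (fun t => h t - g t) 0 1 = RInt h 0 1 - RInt g 0 1.
Proof.
  intros hg hh. apply (RInt_minus h g 0 1); apply (@ex_RInt_continuous R_CompleteNormedModule); intros; apply C1_cont; auto.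
Qed.

Lemma int_le_const (d : R -> R) S : (forall t, continuous d t) -> (forall t, 0 <= t <= 1 -> d t <= S) ->
  RInt d 0 1 <= S.
Proof.
  intros hc hb.
  replace S with (RInt (fun _ => S) 0 1).
  2:{ rewrite RInt_const. unfold scal; simpl; unfold mult; simpl. ring. }
  apply RInt_le; [lra| apply (@ex_RInt_continuous R_CompleteNormedModule); auto | apply ex_RInt_const|].
  intros; apply hb; lra.
Qed.

Lemma int_ge_const (d : R -> R) S : (forall t, continuous d t) -> (forall t, 0 <= t <= 1 -> S <= d t) ->
  S <= RInt d 0 1.
Proof.
  intros hc hb.
  replace S with (RInt (fun _ => S) 0 1) at 1.
  2:{ rewrite RInt_const. unfold scal; simpl; unfold mult; simpl. ring. }
  apply RInt_le; [lra| apply ex_RInt_const | apply (@ex_RInt_continuous R_CompleteNormedModule); auto|].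
  intros; apply hb; lra.
Qed.

Section Cmp.
Variables (G V g h : R -> R) (Hg Hh : R).
Hypothesis hG : forall p, ex_derive G p.
Hypothesis hDG : forall p, continuous (Derive G) p.
Hypothesis sg : sol G V g Hg.
Hypothesis sh : sol G V h Hh.

Let d := fun t => h t - g t.

Lemma d_per : periodic1 d.
Proof. destruct sg as [pg _]; destruct sh as [ph _]. intro x; unfold d; rewrite pg, ph; auto. Qed.

Lemma d_cont : forall t, continuous d t.
Proof.
  destruct sg as [_ [cg _]]; destruct sh as [_ [ch _]]. intro t.
  apply (continuous_minus h g t); apply C1_cont; auto.
Qed.

Lemma d_der : forall t, is_derive d t ((Hh - Hg) - (G (h t) - G (g t))).
Proof.
  destruct sg as [_ [cg eg]]; destruct sh as [_ [ch eh]]. intro t.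
  replace ((Hh - Hg) - (G (h t) - G (g t))) with (Derive h t - Derive g t).
  - apply (is_derive_minus h g t); apply C1_der; auto.
  - rewrite <- (eg t), <- (eh t). ring.
Qed.

Lemma d_lip : exists M, 0 <= M /\ forall t, Rabs (G (h t) - G (g t)) <= M * Rabs (d t).
Proof.
  destruct sg as [pg [cg _]]; destruct sh as [ph [ch _]].
  destruct (range01 g pg cg) as [rg rg'].
  destruct (range01 h ph ch) as [rh rh'].
  set (A := Rmin (fmin01 g) (fmin01 h)). set (B := Rmax (fmax01 g) (fmax01 h)).
  assert (hAB : A <= B).
  { unfold A, B. apply Rle_trans with (fmin01 g); [apply Rmin_l|].
    apply Rle_trans with (fmax01 g); [auto|apply Rmax_l]. }
  exists (Kmax G A B). split; [apply Kmax_nonneg; auto|].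
  intro t. apply G_lip; auto.
  - specialize (rh t). unfold A, B. split.
    + apply Rle_trans with (fmin01 h); [apply Rmin_r|lra].
    + apply Rle_trans with (fmax01 h); [lra|apply Rmax_r].
  - specialize (rg t). unfold A, B. split.
    + apply Rle_trans with (fmin01 g); [apply Rmin_l|lra].
    + apply Rle_trans with (fmax01 g); [lra|apply Rmax_l].
Qed.

Lemma comparison : RInt g 0 1 <= RInt h 0 1 -> forall x, g x <= h x.
Proof.
  intro hint.
  assert (hI : RInt d 0 1 = RInt h 0 1 - RInt g 0 1).
  { destruct sg as [_ [cg _]]; destruct sh as [_ [ch _]]. apply diff_int; auto. }
  destruct (lub_char d 0 1 ltac:(lra) (fun t _ => d_cont t)) as [l1 [y [hy1 hy2]]].
  set (S := real (Lub_Rbar (fun z => exists p, 0 <= p <= 1 /\ z = d p))) in *.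
  assert (hS : 0 <= d y).
  { rewrite hy2. apply Rle_trans with (RInt d 0 1); [lra|]. apply int_le_const; [apply d_cont|auto]. }
  destruct (d_lip) as [M [hM hl]].
  intro x0. destruct (Rle_dec (g x0) (h x0)) as [|hlt]; [auto|exfalso].
  destruct (per_reduce d d_per x0) as [x [hx hdx]].
  assert (hdx0 : d x < 0) by (rewrite <- hdx; unfold d; lra).
  destruct (Rle_dec Hg Hh) as [hH|hH].
  -
    set (y' := if Rle_dec y x then y else y - 1).
    assert (hy' : y' <= x /\ 0 <= d y').
    { unfold y'. destruct (Rle_dec y x); split; try lra.
      rewrite <- (d_per (y - 1)). replace (y - 1 + 1) with y by ring. lra. }
    apply (barrier (fun t => d (- t)) (fun t => - ((Hh - Hg) - (G (h (- t)) - G (g (- t))))) M (- x) (- y')).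
    + lra.
    + intro t. pose proof (d_der (- t)) as H0.
      assert (H1 : is_derive Ropp t (-1)) by (auto_derive; auto).
      pose proof (is_derive_comp d Ropp t _ _ H0 H1) as H2.
      replace (- ((Hh - Hg) - (G (h (- t)) - G (g (- t))))) with
        (scal (-1) ((Hh - Hg) - (G (h (- t)) - G (g (- t))))).
      exact H2. unfold scal; simpl; unfold mult; simpl; ring.
    + rewrite Ropp_involutive. auto.
    + rewrite Ropp_involutive. tauto.
    + intros t _ hneg. specialize (hl (- t)).
      cbv beta in hneg |- *. rewrite (Rabs_left (d (- t))) in hl by lra.
      pose proof (Rle_abs (G (h (- t)) - G (g (- t)))). nra.
  - set (y' := if Rle_dec x y then y else y + 1).
    assert (hy' : x <= y' /\ 0 <= d y').
    { unfold y'. destruct (Rle_dec x y); split; try lra.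
      rewrite (d_per y). lra. }
    apply (barrier d (fun t => (Hh - Hg) - (G (h t) - G (g t))) M x y').
    + tauto.
    + apply d_der.
    + auto.
    + tauto.
    + intros t _ hneg. specialize (hl t).
      cbv beta in hneg |- *. rewrite (Rabs_left (d t)) in hl by lra.
      pose proof (Rle_abs (- (G (h t) - G (g t)))) as hh. rewrite Rabs_Ropp in hh.
      apply Rnot_le_lt in hH. nra.
Qed.

Lemma closeness M : 0 <= M -> (forall t, Rabs (G (h t) - G (g t)) <= M * Rabs (d t)) ->
  (forall x, g x <= h x) -> forall x, h x - g x <= 2 * (RInt h 0 1 - RInt g 0 1) * exp M.
Proof.
  intros hM hl hgh.
  assert (hI : RInt d 0 1 = RInt h 0 1 - RInt g 0 1).
  { destruct sg as [_ [cg _]]; destruct sh as [_ [ch _]]. apply diff_int; auto. }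
  rewrite <- hI. set (c := RInt d 0 1).
  assert (hpos : forall t, 0 <= d t) by (intro t; unfold d; specialize (hgh t); lra).
  destruct (glb_char d 0 1 ltac:(lra) (fun t _ => d_cont t)) as [l1 [x0 [hx1 hx2]]].
  set (S := real (Glb_Rbar (fun z => exists p, 0 <= p <= 1 /\ z = d p))) in *.
  assert (hmin : forall z, d x0 <= d z).
  { intro z. destruct (per_reduce d d_per z) as [z' [hz ->]]. rewrite hx2. apply l1; auto. }
  assert (hc : d x0 <= c).
  { apply int_ge_const; [apply d_cont|]. intros; apply hmin. }
  assert (hF := fermat_min d _ x0 d_der hmin). cbv beta in hF.
  assert (hD : Hh - Hg <= M * c).
  { specialize (hl x0). rewrite (Rabs_right (d x0)) in hl by (apply Rle_ge; auto).
    pose proof (Rle_abs (G (h x0) - G (g x0))). nra. }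
  set (phi := fun t => (c + d t) * exp (- M * t)).
  assert (hphi : forall t, is_derive phi t (((Hh - Hg) - (G (h t) - G (g t))) * exp (- M * t) + (c + d t) * (- M * exp (- M * t)))).
  { intro t. unfold phi.
    assert (H2 : is_derive (fun t => exp (- M*t)) t (- M * exp(- M*t))) by (auto_derive; [auto|ring]).
    assert (H1 : is_derive (fun t => c + d t) t ((Hh - Hg) - (G (h t) - G (g t)))).
    { replace ((Hh - Hg) - (G (h t) - G (g t))) with (plus 0 ((Hh - Hg) - (G (h t) - G (g t)))).
      apply (is_derive_plus (fun _ => c) d). { assert (is_derive (fun _ : R => (c:R)) t 0) by (auto_derive; auto; ring). exact H. } apply d_der.
      unfold plus; simpl; ring. }
    pose proof (@is_derive_mult R_AbsRing (fun t => c + d t) (fun t => exp (- M*t)) t _ _ H1 H2 ltac:(intros; apply Rmult_comm)) as H3.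
    exact H3. }
  assert (hmain : forall t, x0 <= t <= x0 + 1 -> d t <= 2 * c * exp M).
  { intros t ht.
    assert (phi t <= phi x0).
    { apply (nonincr phi _ x0 t hphi); [lra|]. intros u hu.
      specialize (hl u). rewrite (Rabs_right (d u)) in hl by (apply Rle_ge; auto).
      pose proof (Rle_abs (- (G (h u) - G (g u)))) as hh. rewrite Rabs_Ropp in hh.
      assert (0 < exp (- M * u)) by apply exp_pos.
      assert (((Hh - Hg) - (G (h u) - G (g u))) - M * (c + d u) <= 0) by nra.
      nra. }
    unfold phi in H.
    replace (exp (- M * x0)) with (exp (- M * t) * exp (M * (t - x0))) in H
      by (rewrite <- exp_plus; f_equal; ring).
    assert (hE : 0 < exp (- M * t)) by apply exp_pos.
    assert (hle : c + d t <= (c + d x0) * exp (M * (t - x0))).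
    { apply Rmult_le_reg_r with (exp (- M * t)); [auto|]. nra. }
    assert (hexp : exp (M * (t - x0)) <= exp M).
    { destruct (Req_dec (M * (t - x0)) M) as [e|ne]; [rewrite e; lra|].
      left; apply exp_increasing. nra. }
    assert (0 <= d x0) by auto.
    assert (0 < exp (M * (t - x0))) by apply exp_pos.
    nra. }
  intro x. destruct (per_reduce d d_per x) as [x' [hx' hdx]].
  change (d x <= 2 * c * exp M). rewrite hdx.
  destruct (Rle_dec x0 x') as [hle|hle].
  - apply hmain; lra.
  - rewrite <- (d_per x'). apply hmain; lra.
Qed.

End Cmp.

Lemma absDG_pt G : (forall p, continuous (Derive G) p) -> forall b eps, 0 < eps ->
  exists del, 0 < del /\ forall x, Rabs (x - b) < del -> Rabs (Derive G x) < Rabs (Derive G b) + eps.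
Proof.
  intros hc b eps he.
  assert (hp : continuity_pt (fun p => Rabs (Derive G p)) b) by (apply cont_pt, absDG_cont; auto).
  destruct (hp eps he) as [del [hdel hd]].
  exists del; split; auto. intros x hx.
  destruct (Req_dec x b) as [->|hne]; [lra|].
  assert (R_dist (Rabs (Derive G x)) (Rabs (Derive G b)) < eps).
  { apply hd. split; [split; [exact I| auto]| exact hx]. }
  unfold R_dist in H. apply Rabs_def2 in H. lra.
Qed.

Lemma Kmax_cont_r G a b : (forall p, continuous (Derive G) p) -> a <= b -> forall eps, 0 < eps ->
  exists eta, 0 < eta /\ forall b', b <= b' <= b + eta -> Kmax G a b' <= Kmax G a b + eps.
Proof.
  intros hc hab eps he. destruct (absDG_pt G hc b eps he) as [del [hdel hd]].
  exists (del / 2). split; [lra|]. intros b' hb'.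
  destruct (Kmax_char G a b' hc ltac:(lra)) as [_ [p [hp <-]]].
  destruct (Kmax_char G a b hc hab) as [k _].
  destruct (Rle_dec p b) as [hpb|hpb].
  - assert (Rabs (Derive G p) <= Kmax G a b) by (apply k; lra). lra.
  - assert (Rabs (Derive G p) < Rabs (Derive G b) + eps) by (apply hd; rewrite Rabs_right; lra).
    assert (Rabs (Derive G b) <= Kmax G a b) by (apply k; lra). lra.
Qed.

Lemma Kmax_cont_l G a b : (forall p, continuous (Derive G) p) -> a <= b -> forall eps, 0 < eps ->
  exists eta, 0 < eta /\ forall a', a - eta <= a' <= a -> Kmax G a' b <= Kmax G a b + eps.
Proof.
  intros hc hab eps he. destruct (absDG_pt G hc a eps he) as [del [hdel hd]].
  exists (del / 2). split; [lra|]. intros a' ha'.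
  destruct (Kmax_char G a' b hc ltac:(lra)) as [_ [p [hp <-]]].
  destruct (Kmax_char G a b hc hab) as [k _].
  destruct (Rle_dec a p) as [hpb|hpb].
  - assert (Rabs (Derive G p) <= Kmax G a b) by (apply k; lra). lra.
  - assert (Rabs (Derive G p) < Rabs (Derive G a) + eps) by (apply hd; rewrite Rabs_left; lra).
    assert (Rabs (Derive G a) <= Kmax G a b) by (apply k; lra). lra.
Qed.

Lemma fmax_attain u : isC1 u -> exists p, 0 <= p <= 1 /\ u p = fmax01 u.
Proof.
  intro hc. destruct (lub_char u 0 1 ltac:(lra) (fun x _ => C1_cont u hc x)) as [_ h]. exact h.
Qed.

Lemma fmin_attain u : isC1 u -> exists p, 0 <= p <= 1 /\ u p = fmin01 u.
Proof.
  intro hc. destruct (glb_char u 0 1 ltac:(lra) (fun x _ => C1_cont u hc x)) as [_ h]. exact h.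
Qed.

Lemma fmax_ge u x : isC1 u -> 0 <= x <= 1 -> u x <= fmax01 u.
Proof.
  intros hc hx. destruct (lub_char u 0 1 ltac:(lra) (fun x _ => C1_cont u hc x)) as [h _]. apply h; auto.
Qed.

Lemma fmin_le u x : isC1 u -> 0 <= x <= 1 -> fmin01 u <= u x.
Proof.
  intros hc hx. destruct (glb_char u 0 1 ltac:(lra) (fun x _ => C1_cont u hc x)) as [h _]. apply h; auto.
Qed.

Lemma fmax_mono u w : isC1 u -> isC1 w -> (forall x, u x <= w x) -> fmax01 u <= fmax01 w.
Proof.
  intros hu hw hle. destruct (fmax_attain u hu) as [p [hp <-]].
  apply Rle_trans with (w p); auto. apply fmax_ge; auto.
Qed.

Lemma fmin_mono u w : isC1 u -> isC1 w -> (forall x, u x <= w x) -> fmin01 u <= fmin01 w.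
Proof.
  intros hu hw hle. destruct (fmin_attain w hw) as [p [hp <-]].
  apply Rle_trans with (u p); auto. apply fmin_le; auto.
Qed.

Theorem lemma5p2
  (G : R -> R) (p1 p2 l : R) (f V : R -> R) (F : R -> R -> R) :
  (* G in C^2 *)
  (forall p, ex_derive G p) ->
  (forall p, ex_derive (Derive G) p) ->
  (forall p, continuous (Derive (Derive G)) p) ->
  (* G coercive *)
  filterlim G (Rbar_locally p_infty) (Rbar_locally p_infty) ->
  filterlim G (Rbar_locally m_infty) (Rbar_locally p_infty) ->
  p1 < p2 -> Derive G p1 < 0 -> 0 < Derive G p2 ->
  let L := Derive G p2 / (Derive G p2 - Derive G p1) in
  0 < l -> l < Rmin L (1 - L) ->
  let K1 := Kmax G p1 p2 in
  (* f *)
  periodic1 f -> isC1 f ->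
  (exists Lc, forall x y, Rabs (Derive f x - Derive f y) <= Lc * Rabs (x - y)) ->
  (forall x, p1 <= f x /\ f x <= p2) ->
  (forall x, 0 <= x /\ x <= L - l -> f x = p1) ->
  (forall x, L <= x /\ x <= 1 - l -> f x = p2) ->
  RInt (fun x => Derive G (f x)) 0 1 = 0 ->
  (forall x, V x = - Derive f x - G (f x)) ->
  let theta0 := RInt f 0 1 in
  (* F theta = f_theta *)
  (forall theta, isC1 (F theta) /\ periodic1 (F theta) /\ RInt (F theta) 0 1 = theta /\
     exists H, forall x, Derive (F theta) x + G (F theta x) + V x = H) ->
  decr_to_at_0 (fun c => K1th G F theta0 (theta0 + c)) K1 /\
  decr_to_at_0 (fun c => K1th G F (theta0 - c) theta0) K1.
Proof.
  intros hG hDG2 _ _ _ hp12 _ _ L hl1 hl2 K1 hfp hfc _ hfr hf1 hf2 _ hV theta0 hF.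
  assert (hDG : forall p, continuous (Derive G) p).
  { intro p. apply (ex_derive_continuous (Derive G) p). apply hDG2. }
  assert (solF : forall th, exists H, sol G V (F th) H).
  { intro th. destruct (hF th) as [c [p [_ [H e]]]]. exists H. split; [|split]; auto. }
  assert (intF : forall th, RInt (F th) 0 1 = th) by (intro th; apply hF).
  assert (C1F : forall th, isC1 (F th)) by (intro th; apply hF).
  assert (perF : forall th, periodic1 (F th)) by (intro th; apply hF).
  assert (solf : sol G V f 0).
  { split; [|split]; auto. intro x. rewrite hV. ring. }
  assert (cmp : forall t1 t2, t1 <= t2 -> forall x, F t1 x <= F t2 x).
  { intros t1 t2 ht. destruct (solF t1) as [H1 s1]. destruct (solF t2) as [H2 s2].
    apply (comparison G V (F t1) (F t2) H1 H2 hG hDG s1 s2). rewrite !intF. auto. }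
  assert (hF0 : forall x, F theta0 x = f x).
  { destruct (solF theta0) as [H0 s0]. intro x. apply Rle_antisym.
    - apply (comparison G V (F theta0) f H0 0 hG hDG s0 solf). rewrite intF. unfold theta0. lra.
    - apply (comparison G V f (F theta0) 0 H0 hG hDG solf s0). rewrite intF. unfold theta0. lra. }
  assert (hLl : l < L /\ l < 1 - L).
  { pose proof (Rmin_l L (1 - L)). pose proof (Rmin_r L (1 - L)). lra. }
  assert (fmaxF0 : fmax01 (F theta0) = p2).
  { apply Rle_antisym.
    - destruct (fmax_attain _ (C1F theta0)) as [p [_ <-]]. rewrite hF0. apply hfr.
    - rewrite <- (hf2 L) by lra. rewrite <- hF0. apply fmax_ge; auto. lra. }
  assert (fminF0 : fmin01 (F theta0) = p1).
  { apply Rle_antisym.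
    - rewrite <- (hf1 0) by lra. rewrite <- hF0. apply fmin_le; auto. lra.
    - destruct (fmin_attain _ (C1F theta0)) as [p [_ <-]]. rewrite hF0. apply hfr. }
  set (A := fmin01 (F (theta0 - 1))). set (B := fmax01 (F (theta0 + 1))).
  assert (hrA : forall th x, theta0 - 1 <= th -> A <= F th x).
  { intros th x h. apply Rle_trans with (F (theta0 - 1) x).
    - apply (range01 _ (perF _) (C1F _)).
    - apply cmp; auto. }
  assert (hrB : forall th x, th <= theta0 + 1 -> F th x <= B).
  { intros th x h. apply Rle_trans with (F (theta0 + 1) x).
    - apply cmp; auto.
    - apply (range01 _ (perF _) (C1F _)). }
  assert (hAB : A <= B) by (apply Rle_trans with (F theta0 0); [apply hrA|apply hrB]; lra).
  set (M := Kmax G A B).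
  assert (hM : 0 <= M) by (apply Kmax_nonneg; auto).
  assert (close : forall t1 t2, theta0 - 1 <= t1 -> t1 <= t2 -> t2 <= theta0 + 1 ->
            forall x, F t2 x - F t1 x <= 2 * (t2 - t1) * exp M).
  { intros t1 t2 h1 h2 h3 x.
    destruct (solF t1) as [H1 s1]. destruct (solF t2) as [H2 s2].
    rewrite <- (intF t1), <- (intF t2) at 2.
    apply (closeness G V (F t1) (F t2) H1 H2 s1 s2 M hM).
    - intro t. cbv beta. apply G_lip; auto.
      + split; [apply hrA|apply hrB]; lra.
      + split; [apply hrA|apply hrB]; lra.
    - apply cmp; auto. }
  assert (hexp : 0 < exp M) by apply exp_pos.
  assert (bnd1 : forall c, 0 < c <= 1 -> fmax01 (F (theta0 + c)) <= p2 + 2 * c * exp M).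
  { intros c hc. destruct (fmax_attain _ (C1F (theta0 + c))) as [p [_ <-]].
    pose proof (close theta0 (theta0 + c) ltac:(lra) ltac:(lra) ltac:(lra) p) as H.
    rewrite hF0 in H. pose proof (hfr p). replace (theta0 + c - theta0) with c in H by ring. lra. }
  assert (bnd2 : forall c, 0 < c <= 1 -> p1 - 2 * c * exp M <= fmin01 (F (theta0 - c))).
  { intros c hc. destruct (fmin_attain _ (C1F (theta0 - c))) as [p [_ <-]].
    pose proof (close (theta0 - c) theta0 ltac:(lra) ltac:(lra) ltac:(lra) p) as H.
    rewrite hF0 in H. pose proof (hfr p). replace (theta0 - (theta0 - c)) with c in H by ring. lra. }
  assert (ge1 : forall c, 0 <= c -> p2 <= fmax01 (F (theta0 + c))).
  { intros c hc. rewrite <- fmaxF0. apply fmax_mono; auto. apply cmp; lra. }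
  assert (le2 : forall c, 0 <= c -> fmin01 (F (theta0 - c)) <= p1).
  { intros c hc. rewrite <- fminF0. apply fmin_mono; auto. apply cmp; lra. }
  split; split.
  - intros c c' hc hcc'. unfold K1th. rewrite fminF0. apply Kmax_mono; auto; try lra.
    + pose proof (ge1 c); lra.
    + apply fmax_mono; auto. apply cmp; lra.
  - apply filterlim_locally. intro eps.
    destruct (Kmax_cont_r G p1 p2 hDG ltac:(lra) (eps/2) ltac:(destruct eps; simpl; lra)) as [eta [heta hk]].
    set (del := Rmin 1 (eta / (2 * exp M))).
    assert (hdel : 0 < del) by (unfold del; apply Rmin_glb_lt; [lra| apply Rdiv_lt_0_compat; lra]).
    exists (mkposreal del hdel). intros c hc hc0.
    change (Rabs (c - 0) < del) in hc. rewrite Rminus_0_r, Rabs_right in hc by lra.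
    change (Rabs (K1th G F theta0 (theta0 + c) - K1) < eps).
    unfold K1th; rewrite fminF0. unfold K1.
    assert (hc1 : c <= 1) by (pose proof (Rmin_l 1 (eta / (2 * exp M))); fold del in H; lra).
    assert (hc2 : 2 * c * exp M <= eta).
    { pose proof (Rmin_r 1 (eta / (2 * exp M))) as H; fold del in H.
      assert (c < eta / (2 * exp M)) by lra.
      apply Rlt_le. apply (Rmult_lt_compat_r (2 * exp M)) in H0; [|lra].
      unfold Rdiv in H0. rewrite Rmult_assoc, Rinv_l, Rmult_1_r in H0 by lra. lra. }
    pose proof (ge1 c ltac:(lra)). pose proof (bnd1 c ltac:(lra)).
    assert (Kmax G p1 (fmax01 (F (theta0 + c))) <= Kmax G p1 p2 + eps / 2) by (apply hk; lra).
    assert (Kmax G p1 p2 <= Kmax G p1 (fmax01 (F (theta0 + c)))) by (apply Kmax_mono; auto; lra).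
    destruct eps as [e he]; simpl in *. apply Rabs_def1; lra.
  - intros c c' hc hcc'. unfold K1th. rewrite fmaxF0. apply Kmax_mono; auto; try lra.
    + apply fmin_mono; auto. apply cmp; lra.
    + pose proof (le2 c); lra.
  - apply filterlim_locally. intro eps.
    destruct (Kmax_cont_l G p1 p2 hDG ltac:(lra) (eps/2) ltac:(destruct eps; simpl; lra)) as [eta [heta hk]].
    set (del := Rmin 1 (eta / (2 * exp M))).
    assert (hdel : 0 < del) by (unfold del; apply Rmin_glb_lt; [lra| apply Rdiv_lt_0_compat; lra]).
    exists (mkposreal del hdel). intros c hc hc0.
    change (Rabs (c - 0) < del) in hc. rewrite Rminus_0_r, Rabs_right in hc by lra.
    change (Rabs (K1th G F (theta0 - c) theta0 - K1) < eps).
    unfold K1th; rewrite fmaxF0. unfold K1.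
    assert (hc1 : c <= 1) by (pose proof (Rmin_l 1 (eta / (2 * exp M))); fold del in H; lra).
    assert (hc2 : 2 * c * exp M <= eta).
    { pose proof (Rmin_r 1 (eta / (2 * exp M))) as H; fold del in H.
      assert (c < eta / (2 * exp M)) by lra.
      apply Rlt_le. apply (Rmult_lt_compat_r (2 * exp M)) in H0; [|lra].
      unfold Rdiv in H0. rewrite Rmult_assoc, Rinv_l, Rmult_1_r in H0 by lra. lra. }
    pose proof (le2 c ltac:(lra)). pose proof (bnd2 c ltac:(lra)).
    assert (Kmax G (fmin01 (F (theta0 - c))) p2 <= Kmax G p1 p2 + eps / 2) by (apply hk; lra).
    assert (Kmax G p1 p2 <= Kmax G (fmin01 (F (theta0 - c))) p2) by (apply Kmax_mono; auto; lra).
    destruct eps as [e he]; simpl in *. apply Rabs_def1; lra.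
Qed.
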